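(* Let $G$ be a finite simple graph and let $\{a,b\}$ be an edge of $G$. Then \[I(G)^{[2]}:ab = I(G-\{a,b\})+\big(cd \;:\; c\in N_G(a),\ d\in N_G(b),\ c\neq d,\ c,d\notin\{a,b\}\big).\] In particular, $I(G)^{[2]}:ab$ is the edge ideal of a graph.
   Context: $G$ is a finite simple graph on vertex set $\{x_1,\ldots,x_n\}$, identified with the variables of $S=K[x_1,\ldots,x_n]$ ($K$ a field); edges are identified with the corresponding degree-2 monomials. $I(G)$ is the edge ideal, generated by the monomials $x_ix_j$ with $\{x_i,x_j\}\in E(G)$. $I(G)^{[2]}$ is the ideal generated by all products $e_1e_2$ where $e_1,e_2$ are disjoint edges of $G$. $N_G(x)$ is the set of neighbours of $x$ in $G$. For $W\subseteq V(G)$, $G-W$ denotes the induced subgraph of $G$ on $V(G)\setminus W$. *)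

(* Defs.v *)
From HB Require Import structures.
From mathcomp Require Import all_boot all_order all_algebra.
Set Implicit Arguments. Unset Strict Implicit. Unset Printing Implicit Defensive.
Import GRing.Theory.
Local Open Scope ring_scope.

(* The polynomial ring K[x_0,...,x_{n-1}], built as iterated univariate
   polynomial rings: mpoly K 0 = K, mpoly K (n+1) = (mpoly K n)[X]. *)
Fixpoint mpoly (K : comNzRingType) (n : nat) : comNzRingType :=
  match n with
  | 0 => K
  | n'.+1 => {poly mpoly K n'}
  end.

Fixpoint mvar (K : comNzRingType) (n : nat) (i : nat) : mpoly K n :=
  match n return mpoly K n with
  | 0 => 0
  | n'.+1 => if i == n' then 'X else (mvar K n' i)%:P
  end.

Definition x (K : comNzRingType) (n : nat) (i : 'I_n) : mpoly K n := mvar K n i.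

Definition gen_ideal (R : comNzRingType) (P : R -> Prop) : R -> Prop :=
  fun f => exists (k : nat) (c g : 'I_k -> R),
      (forall j, P (g j)) /\ f = \sum_(j < k) c j * g j.

Definition ideal_add (R : comNzRingType) (I J : R -> Prop) : R -> Prop :=
  fun f => exists g h, I g /\ J h /\ f = g + h.

Definition ideal_colon (R : comNzRingType) (I : R -> Prop) (h : R) : R -> Prop :=
  fun f => I (f * h).

Definition simple_graph (n : nat) (e : rel 'I_n) : Prop :=
  symmetric e /\ irreflexive e.

Definition edge_ideal (K : comNzRingType) (n : nat) (e : rel 'I_n) : mpoly K n -> Prop :=
  gen_ideal (fun g => exists i j, e i j /\ g = x K i * x K j).

Definition edge_ideal_sq_matching (K : comNzRingType) (n : nat) (e : rel 'I_n)
  : mpoly K n -> Prop :=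
  gen_ideal (fun g => exists i j k l, e i j /\ e k l /\
     [/\ i != k, i != l, j != k & j != l] /\
     g = x K i * x K j * (x K k * x K l)).

(* Induced subgraph G - W on V \ W (as a graph on 'I_n whose vertices in W
   are removed; its edge ideal lives in the same ring S). *)
Definition del_vertices (n : nat) (e : rel 'I_n) (W : pred 'I_n) : rel 'I_n :=
  fun i j => [&& e i j, i \notin W & j \notin W].

Arguments x K {n} i.
Arguments edge_ideal K {n} e _.
Arguments edge_ideal_sq_matching K {n} e _.

(* Main.v *)
Require Import Defs.
From HB Require Import structures.
From mathcomp Require Import all_boot all_order all_algebra.
Import GRing.Theory.
Set Implicit Arguments. Unset Strict Implicit. Unset Printing Implicit Defensive.
Local Open Scope ring_scope.

Definition is_ideal (R : comNzRingType) (I : R -> Prop) :=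
  I 0 /\ (forall f g, I f -> I g -> I (f + g)) /\ (forall c f, I f -> I (c * f)).

Lemma gen_ideal_is_ideal (R : comNzRingType) (P : R -> Prop) : is_ideal (gen_ideal P).
Proof.
split; [|split].
- exists 0%N, (fun _ => 0), (fun _ => 0); split; first by case.
  by rewrite big_ord0.
- move=> f g [k1 [c1 [g1 [H1 ->]]]] [k2 [c2 [g2 [H2 ->]]]].
  exists (k1 + k2)%N,
    (fun j => match split j with inl j1 => c1 j1 | inr j2 => c2 j2 end),
    (fun j => match split j with inl j1 => g1 j1 | inr j2 => g2 j2 end).
  split; first by move=> j; case: (split j).
  rewrite big_split_ord /=.
  congr (_ + _); apply: eq_bigr => j _.
  + by rewrite (unsplitK (inl _ j)).
  + by rewrite (unsplitK (inr _ j)).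
- move=> c f [k [c1 [g1 [H1 ->]]]].
  exists k, (fun j => c * c1 j), g1; split => //.
  rewrite big_distrr; apply: eq_bigr => j _. exact: mulrA.
Qed.

Lemma gen_ideal_gen (R : comNzRingType) (P : R -> Prop) g : P g -> gen_ideal P g.
Proof.
move=> Pg; exists 1%N, (fun _ => 1), (fun _ => g); split => //.
by rewrite big_ord1 mul1r.
Qed.

Lemma ideal_sum (R : comNzRingType) (I : R -> Prop) (T : Type) (s : seq T) (F : T -> R) :
  is_ideal I -> (forall t, I (F t)) -> I (\sum_(t <- s) F t).
Proof.
move=> [I0 [ID IM]] HF; exact: (big_ind I).
Qed.

Lemma gen_ideal_min (R : comNzRingType) (P I : R -> Prop) f :
  is_ideal I -> (forall g, P g -> I g) -> gen_ideal P f -> I f.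
Proof.
move=> HI HP [k [c [g [Hg ->]]]].
apply: ideal_sum => // j; case: HI => _ [_ IM]; exact/IM/HP.
Qed.

Lemma ideal_add_is_ideal (R : comNzRingType) (I J : R -> Prop) :
  is_ideal I -> is_ideal J -> is_ideal (ideal_add I J).
Proof.
move=> [I0 [ID IM]] [J0 [JD JM]]; split; [|split].
- by exists 0, 0; rewrite addr0.
- move=> f g [g1 [h1 [? [? ->]]]] [g2 [h2 [? [? ->]]]].
  exists (g1 + g2), (h1 + h2); split; [|split]; auto.
  by rewrite addrACA.
- move=> c f [g1 [h1 [? [? ->]]]].
  exists (c * g1), (c * h1); split; [|split]; auto.
  by rewrite mulrDr.
Qed.

Lemma colon_is_ideal (R : comNzRingType) (I : R -> Prop) h :
  is_ideal I -> is_ideal (ideal_colon I h).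
Proof.
move=> [I0 [ID IM]]; rewrite /ideal_colon; split; [|split].
- by rewrite mul0r.
- by move=> f g ? ?; rewrite mulrDl; auto.
- by move=> c f ?; rewrite -mulrA; auto.
Qed.


Lemma tri (T : eqType) (a b u : T) : u = a \/ u = b \/ u \notin pred2 a b.
Proof.
case: (eqVneq u a) => [->|h1]; [by left|].
case: (eqVneq u b) => [->|h2]; [by right; left|].
by right; right; rewrite !inE negb_or h1 h2.
Qed.

Ltac dis1 := first [ done | by rewrite eq_sym | match goal with S : symmetric _ |- _ => by rewrite S end ].
Ltac dis := repeat (apply/andP; split); dis1.
Ltac rewrite_all_done := repeat (apply/andP; split); dis1.
Lemma comb (T : eqType) (e : rel T) (a b i j k l : T) (pos : T -> bool) :
  symmetric e -> irreflexive e -> a != b ->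
  e i j -> e k l -> i != k -> i != l -> j != k -> j != l ->
  pos i -> pos j -> pos k -> pos l ->
  (exists u v, e u v && (u \notin pred2 a b) && (v \notin pred2 a b) && pos u && pos v)
  \/ (exists c d, [/\ e c a, e d b, c != d, c \notin pred2 a b & d \notin pred2 a b]
        /\ pos c && pos d).
Proof.
move=> sym irr nab eij ekl nik nil njk njl pi pj pk pl.
have nij : i != j by apply/eqP => E; move: eij; rewrite E irr.
have nkl : k != l by apply/eqP => E; move: ekl; rewrite E irr.
have nba : b != a by rewrite eq_sym.
have eba : e b a = e a b by rewrite sym.
have Ha : a \in pred2 a b by rewrite !inE eqxx.
have Hb : b \in pred2 a b by rewrite !inE eqxx orbT.
case: (tri a b i) => [Ei|[Ei|Ni]]; case: (tri a b j) => [Ej|[Ej|Nj]];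
case: (tri a b k) => [Ek|[Ek|Nk]]; case: (tri a b l) => [El|[El|Nl]];
  subst; rewrite ?eqxx // ?irr // in nij nkl nik nil njk njl eij ekl *.
all: first
  [ match goal with H : is_true (?E ?u ?v) |- _ =>
      left; exists u, v; rewrite H /=; rewrite_all_done end
  | match goal with H1 : is_true (?E ?c ?p), H2 : is_true (?E ?d ?q) |- _ =>
      right; exists c, d; split; [split|]; dis end
  | match goal with H1 : is_true (?E ?p ?c), H2 : is_true (?E ?d ?q) |- _ =>
      right; exists c, d; split; [split|]; dis end
  | match goal with H1 : is_true (?E ?c ?p), H2 : is_true (?E ?q ?d) |- _ =>
      right; exists c, d; split; [split|]; dis end
  | match goal with H1 : is_true (?E ?p ?c), H2 : is_true (?E ?q ?d) |- _ =>
      right; exists c, d; split; [split|]; dis end ].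
Qed.

Unset Implicit Arguments.
Section Mono.
Variable K : fieldType.

Definition dec (al : nat -> nat) (i : nat) : nat -> nat :=
  fun j => if j == i then (al j).-1 else al j.
Definition inc (al : nat -> nat) (i : nat) : nat -> nat :=
  fun j => if j == i then (al j).+1 else al j.

Fixpoint coefm (n : nat) : (nat -> nat) -> mpoly K n -> K :=
  match n return (nat -> nat) -> mpoly K n -> K with
  | 0 => fun al f => f
  | n'.+1 => fun al (f : {poly mpoly K n'}) => coefm n' al (f`_(al n'))
  end.

Fixpoint mono (n : nat) (al : nat -> nat) : mpoly K n :=
  match n return mpoly K n with
  | 0 => 1
  | n'.+1 => ((mono n' al)%:P * 'X^(al n') : {poly mpoly K n'})
  end.

Fixpoint cst (n : nat) (c : K) : mpoly K n :=
  match n return mpoly K n with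
  | 0 => c
  | n'.+1 => ((cst n' c)%:P : {poly mpoly K n'})
  end.

Lemma cst0 n : cst n 0 = 0.
Proof. by elim: n => //= n ->. Qed.

Lemma coefm0 n al : coefm n al 0 = 0.
Proof. by elim: n al => //= n IH al; rewrite coef0 IH. Qed.

Lemma coefmD n al (f g : mpoly K n) : coefm n al (f + g) = coefm n al f + coefm n al g.
Proof. by elim: n al f g => //= n IH al f g; rewrite coefD IH. Qed.

Lemma coefm_sum n al (T : Type) (s : seq T) (F : T -> mpoly K n) :
  coefm n al (\sum_(t <- s) F t) = \sum_(t <- s) coefm n al (F t).
Proof. exact: (big_morph _ (coefmD n al) (coefm0 n al)). Qed.

Lemma coefm_ext n al be (f : mpoly K n) :
  (forall j, (j < n)%N -> al j = be j) -> coefm n al f = coefm n be f.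
Proof.
elim: n f => //= n IH f H.
rewrite H // (IH _ (fun j ltj => H j (ltnW ltj))) //.
Qed.

Lemma mono_ext n al be :
  (forall j, (j < n)%N -> al j = be j) -> mono n al = mono n be.
Proof.
elim: n => //= n IH H.
by rewrite H // (IH (fun j ltj => H j (ltnW ltj))).
Qed.

Lemma coefmX n al (g : mpoly K n) i : (i < n)%N ->
  coefm n al (g * mvar K n i) = if (0 < al i)%N then coefm n (dec al i) g else 0.
Proof.
elim: n al g => // n IH al g ltin /=.
case: (eqVneq i n) => [->|neq].
- rewrite coefMX /dec eqxx; case: (al n) => [|k] /=; first by rewrite coefm0.
  apply: coefm_ext => j ltj; by rewrite (ltn_eqF ltj).
- have ltin' : (i < n)%N by rewrite ltn_neqAle neq -ltnS.
  have -> : dec al i n = al n by rewrite /dec eq_sym (negbTE neq).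
  by rewrite coefMC IH //.
Qed.

Lemma mono_dec n al i : (i < n)%N -> (0 < al i)%N ->
  mono n al = mono n (dec al i) * mvar K n i.
Proof.
elim: n => // n IH ltin pos /=.
case: (eqVneq i n) pos => [->|neq] pos.
- rewrite /dec eqxx -mulrA -exprSr prednK //.
  congr (_%:P * _); apply: mono_ext => j ltj; by rewrite (ltn_eqF ltj).
- have ltin' : (i < n)%N by rewrite ltn_neqAle neq -ltnS.
  have -> : dec al i n = al n by rewrite /dec eq_sym (negbTE neq).
  rewrite (IH ltin' pos) polyCM.
  by rewrite mulrAC.
Qed.

Definition upd (al : nat -> nat) (i m : nat) : nat -> nat :=
  fun j => if j == i then m else al j.

Lemma expand n (f : mpoly K n) :
  exists s : seq (nat -> nat), f = \sum_(al <- s) cst n (coefm n al f) * mono n al.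
Proof.
elim: n f => [|n IH] f.
  by exists [:: fun _ => 0%N]; rewrite big_seq1 /= mulr1.
have Hm : forall m, exists s : seq (nat -> nat),
  \sum_(k < m) ((f : {poly mpoly K n})`_k)%:P * 'X^k =
  \sum_(al <- s) cst n.+1 (coefm n.+1 al f) * mono n.+1 al.
  elim=> [|m [s1 Hs1]]; first by exists [::]; rewrite big_ord0 big_nil.
  have [s2 Hs2] := IH ((f : {poly mpoly K n})`_m).
  exists (s1 ++ map (fun al => upd al n m) s2).
  rewrite big_ord_recr /= big_cat Hs1 big_map; congr (_ + _).
  rewrite {1}Hs2 rmorph_sum big_distrl /=; apply: eq_bigr => al _ /=.
  rewrite /upd eqxx polyCM -mulrA.
  have E : forall j, (j < n)%N -> (if j == n then m else al j) = al j.
    by move=> j ltj; rewrite (ltn_eqF ltj).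
  by rewrite (coefm_ext _ _ _ _ E) (mono_ext _ _ _ E).
have [s Hs] := Hm (size (f : {poly mpoly K n})).
exists s; rewrite -Hs.
rewrite -[LHS]coefK poly_def; apply: eq_bigr => k _; by rewrite mul_polyC.
Qed.

Lemma coefmX_nz n al (g : mpoly K n) i : (i < n)%N ->
  coefm n al (g * mvar K n i) != 0 -> (0 < al i)%N /\ coefm n (dec al i) g != 0.
Proof. by move=> lt; rewrite coefmX //; case: ifP => //; rewrite eqxx. Qed.

Lemma dec_pos al i j : (0 < dec al i j)%N -> (0 < al j)%N.
Proof. by rewrite /dec; case: ifP => // _; case: (al j). Qed.

Lemma coefm_ab n al (f : mpoly K n) (a b : nat) : (a < n)%N -> (b < n)%N -> a != b ->
  coefm n (inc (inc al a) b) (f * (mvar K n a * mvar K n b)) = coefm n al f.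
Proof.
move=> lta ltb nab.
rewrite mulrA coefmX // {1}/inc eqxx /= coefmX //.
have -> : (0 < dec (inc (inc al a) b) b a)%N.
  by rewrite /dec /inc (negbTE nab) eqxx.
apply: coefm_ext => j _; rewrite /dec /inc.
case: (j =P a) => [->|ja]; rewrite ?(negbTE nab) //.
by case: (j =P b).
Qed.

Lemma mono_two n al u v : (u < n)%N -> (v < n)%N -> u != v ->
  (0 < al u)%N -> (0 < al v)%N ->
  exists m, mono n al = m * (mvar K n u * mvar K n v).
Proof.
move=> ltu ltv nuv pu pv.
have pv' : (0 < dec al u v)%N by rewrite /dec eq_sym (negbTE nuv).
exists (mono n (dec (dec al u) v)).
rewrite (mono_dec _ _ _ ltu pu) (mono_dec _ _ _ ltv pv').
by rewrite -!mulrA [mvar K n v * _]mulrC.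
Qed.
End Mono.

Import GRing.Theory.
Local Open Scope ring_scope.
Unset Implicit Arguments.
Lemma I2_supp (K : fieldType) n (e : rel 'I_n) (F : mpoly K n) be :
  edge_ideal_sq_matching K e F -> coefm K n be F != 0 ->
  exists i j k l : 'I_n, [/\ e i j, e k l, [/\ i != k, i != l, j != k & j != l]
     & [/\ (0 < be i)%N, (0 < be j)%N, (0 < be k)%N & (0 < be l)%N]].
Proof.
case=> k [c [g [Hg ->]]].
rewrite (big_morph _ (coefmD K n be) (coefm0 K n be)) => nz.
have [j Hj] : exists j, coefm K n be (c j * g j) != 0.
  case: (boolP [exists j, coefm K n be (c j * g j) != 0]) => [/existsP //|/existsPn H].
  by rewrite big1 ?eqxx // in nz => j _; apply/eqP; have := H j; rewrite negbK.
have [i1 [j1 [k1 [l1 [e1 [e2 [dist E]]]]]]] := Hg j.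
rewrite E /x !mulrA in Hj.
move: Hj => /coefmX_nz => /(_ (ltn_ord l1)) [pl /coefmX_nz] => /(_ (ltn_ord k1)) [pk].
move=> /coefmX_nz => /(_ (ltn_ord j1)) [pj /coefmX_nz] => /(_ (ltn_ord i1)) [pi _].
exists i1, j1, k1, l1; split => //; split => //.
- exact: (dec_pos _ _ _ (dec_pos _ _ _ (dec_pos _ _ _ pi))).
- exact: (dec_pos _ _ _ (dec_pos _ _ _ pj)).
- exact: (dec_pos _ _ _ pk).
Qed.

Theorem lemma2p5 (K : fieldType) (n : nat) (e : rel 'I_n) (a b : 'I_n) :
  simple_graph e -> e a b ->
  (forall f : mpoly K n,
     ideal_colon (edge_ideal_sq_matching K e) (x K a * x K b) f <->
     ideal_add (edge_ideal K (del_vertices e (pred2 a b)))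
       (gen_ideal (fun g => exists c d : 'I_n,
          [/\ e c a, e d b, c != d, c \notin pred2 a b & d \notin pred2 a b] /\
          g = x K c * x K d)) f)
  /\
  (exists e' : rel 'I_n, simple_graph e' /\
     forall f : mpoly K n,
       ideal_colon (edge_ideal_sq_matching K e) (x K a * x K b) f <->
       edge_ideal K e' f).
Proof.
move=> [sym irr] eab.
have nab : a != b by apply/eqP => E; move: eab; rewrite E irr.
set J := ideal_add _ _.
set I2 := edge_ideal_sq_matching K e.
have HJ : is_ideal J by apply: ideal_add_is_ideal; apply: gen_ideal_is_ideal.
have [J0 [JD JM]] := HJ.
have G0 : forall (P : mpoly K n -> Prop), gen_ideal P 0.
  by move=> P; case: (gen_ideal_is_ideal P).
have JL : forall g, edge_ideal K (del_vertices e (pred2 a b)) g -> J g.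
  by move=> g Hg; exists g, 0; split; [exact: Hg | split; [apply: (G0) | rewrite addr0]].
have JR : forall g, gen_ideal (fun g => exists c d : 'I_n,
          [/\ e c a, e d b, c != d, c \notin pred2 a b & d \notin pred2 a b] /\
          g = x K c * x K d) g -> J g.
  by move=> g Hg; exists 0, g; split; [apply: (G0) | split; [exact: Hg | rewrite add0r]].
have P1 : forall f, ideal_colon I2 (x K a * x K b) f <-> J f.
  move=> f; split.
  - move=> Hf. have [s ->] := expand K n f. apply: (@ideal_sum _ J _ s (fun al => cst K n (coefm K n al f) * mono K n al) HJ) => al.
    case: (eqVneq (coefm K n al f) 0) => [->|nz]; first by rewrite cst0 mul0r.
    apply: (JM).
    set be := inc (inc al a) b.
    have Hbe : coefm K n be (f * (x K a * x K b)) != 0.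
      by rewrite /x coefm_ab.
    have [i [j [k [l [eij ekl [d1 d2 d3 d4] [pi pj pk pl]]]]]] := I2_supp _ _ _ _ _ Hf Hbe.
    have := comb (pos := fun u : 'I_n => (0 < be u)%N) sym irr nab eij ekl d1 d2 d3 d4 pi pj pk pl.
    have bepos : forall u : 'I_n, u \notin pred2 a b -> (0 < be u)%N -> (0 < al u)%N.
      move=> u; rewrite !inE negb_or => /andP [ua ub]; rewrite /be /inc.
      have ua' : (nat_of_ord u == nat_of_ord a) = false by apply/negbTE.
      have ub' : (nat_of_ord u == nat_of_ord b) = false by apply/negbTE.
      by rewrite ua' ub'.
    case => [[u [v /andP[/andP[/andP[/andP[euv nu] nv] pu] pv]]] | [c [d [[eca edb ncd nc nd] /andP[pc pd]]]]].
    + have nuv : u != v by apply/eqP => E; move: euv; rewrite E irr.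
      have [m ->] := mono_two K n al u v (ltn_ord u) (ltn_ord v) nuv (bepos u nu pu) (bepos v nv pv).
      apply: (JM); apply: (JL); apply: gen_ideal_gen; exists u, v; split => //.
      by rewrite /del_vertices euv nu nv.
    + have [m ->] := mono_two K n al c d (ltn_ord c) (ltn_ord d) ncd (bepos c nc pc) (bepos d nd pd).
      apply: (JM); apply: (JR); apply: gen_ideal_gen; exists c, d; split => //.
  - case=> g [h [Hg [Hh ->]]].
    have HC : is_ideal (ideal_colon I2 (x K a * x K b)).
      by apply: colon_is_ideal; apply: gen_ideal_is_ideal.
    have [C0 [CD CM]] := HC.
    apply: (CD).
    + apply: (gen_ideal_min HC _ Hg) => _ [u [v [/andP[euv /andP[nu nv]] ->]]].
      rewrite /ideal_colon; apply: gen_ideal_gen; exists u, v, a, b.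
      move: nu nv; rewrite !inE !negb_or => /andP[ua ub] /andP[va vb].
      by split => //; split => //; split.
    + apply: (gen_ideal_min HC _ Hh) => _ [c [d [[eca edb ncd nc nd] ->]]].
      rewrite /ideal_colon.
      have -> : x K c * x K d * (x K a * x K b) = x K c * x K a * (x K d * x K b).
        by rewrite -!mulrA; congr (_ * _); rewrite mulrCA.
      apply: gen_ideal_gen; exists c, a, d, b.
      move: nc nd; rewrite !inE !negb_or => /andP[ca cb] /andP[da db].
      by do 3 split => //; split => //; rewrite eq_sym.
split => //.
pose e' := fun u v : 'I_n => del_vertices e (pred2 a b) u v ||
  [&& u != v, u \notin pred2 a b, v \notin pred2 a b &
      (e u a && e v b) || (e v a && e u b)].
exists e'; split.
  split.
  - move=> u v; rewrite /e' /del_vertices (sym v u) (eq_sym v u).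
    by case: (e u v); case: (u == v); case: (u \in pred2 a b); case: (v \in pred2 a b);
      case: (e u a); case: (e v b); case: (e v a); case: (e u b).
  - by move=> u; rewrite /e' /del_vertices irr eqxx.
move=> f; apply: (iff_trans (P1 f)); split.
- case=> g [h [Hg [Hh ->]]].
  have [E0 [ED EM]] := gen_ideal_is_ideal (fun g => exists i j, e' i j /\ g = x K i * x K j).
  apply: (ED).
  + apply: (gen_ideal_min (gen_ideal_is_ideal _) _ Hg) => _ [u [v [Huv ->]]].
    by apply: gen_ideal_gen; exists u, v; split => //; rewrite /e' Huv.
  + apply: (gen_ideal_min (gen_ideal_is_ideal _) _ Hh) => _ [c [d [[eca edb ncd nc nd] ->]]].
    apply: gen_ideal_gen; exists c, d; split => //.
    by apply/orP; right; rewrite ncd nc nd eca edb.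
- move=> H; apply: (gen_ideal_min HJ _ H) => _ [u [v [Huv ->]]].
  case/orP: Huv => [Hd|/and4P[nuv nu nv /orP[/andP[eua evb]|/andP[eva eub]]]].
  + by apply: (JL); apply: gen_ideal_gen; exists u, v.
  + by apply: (JR); apply: gen_ideal_gen; exists u, v.
  + rewrite mulrC; apply: (JR); apply: gen_ideal_gen; exists v, u.
    by split => //; split => //; rewrite eq_sym.
Qed.
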